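(* Let $f$ be an L-additive arithmetic function whose associated completely multiplicative function $h_f$ is nonzero-valued, and let $\Lambda_f$ be its generalized von Mangoldt function. Then for every positive integer $n$, $$(\tau\ast\Lambda_f)(n)=\frac{f(n)\tau(n)}{2h_f(n)}.$$
   Context: An arithmetic function $f:\mathbb{N}\to\mathbb{C}$ is L-additive if there is a completely multiplicative function $h_f$ such that $f(mn)=f(m)h_f(n)+f(n)h_f(m)$ for all positive integers $m,n$; such an $h_f$ is fixed. $\Lambda_f(n)=\frac{f(p)}{h_f(p)}$ if $n=p^k$ for some prime $p$ and integer $k\geq1$, and $0$ otherwise. $\tau(n)$ is the number of positive divisors of $n$, and $\ast$ is Dirichlet convolution. *)

(* Defs.v *)
From mathcomp Require Import all_boot all_order all_algebra.
From mathcomp Require Import complex.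
From mathcomp Require Import reals.
Set Implicit Arguments. Unset Strict Implicit. Unset Printing Implicit Defensive.
Import GRing.Theory Num.Theory.
Local Open Scope ring_scope.

(* Arithmetic functions N -> C, represented as nat -> C (value at 0 unused). *)

Definition completely_multiplicative (C : nzRingType) (h : nat -> C) : Prop :=
  h 1%N = 1 /\ forall m n : nat, (0 < m)%N -> (0 < n)%N -> h (m * n)%N = h m * h n.

Definition L_additive_wrt (C : nzRingType) (f h : nat -> C) : Prop :=
  completely_multiplicative h /\
  forall m n : nat, (0 < m)%N -> (0 < n)%N ->
    f (m * n)%N = f m * h n + f n * h m.

Definition Lambda_f (C : fieldType) (f h : nat -> C) (n : nat) : C :=
  (* n = p^k with p prime, k >= 1: then necessarily p = pdiv n, k = logn p n *)
  if (1 < n)%N && (n == pdiv n ^ logn (pdiv n) n)%N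
  then f (pdiv n) / h (pdiv n) else 0.

Definition tau (n : nat) : nat := size (divisors n).

Definition dconv (C : nzRingType) (a b : nat -> C) (n : nat) : C :=
  \sum_(d <- divisors n) a d * b (n %/ d)%N.

(* Main.v *)
Require Import Defs.
From mathcomp Require Import all_boot all_order all_algebra.
From mathcomp Require Import complex.
From mathcomp Require Import reals.
From mathcomp Require Import ring.
Import GRing.Theory Num.Theory.
Local Open Scope ring_scope.
Section Aux.
Variable C : numFieldType.

Lemma sum_const_seq (s : seq nat) (c : C) : \sum_(i <- s) c = c *+ size s.
Proof. elim: s => [|a s IH]; first by rewrite big_nil. by rewrite big_cons IH mulrS. Qed.

Lemma divn_div n d : (0 < n)%N -> (d %| n)%N -> (n %/ (n %/ d))%N = d.
Proof. move=> n0 dn; rewrite divnA // mulKn //. Qed.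

Lemma sum_div_rev n (F : nat -> C) : (0 < n)%N ->
  \sum_(d <- divisors n) F d = \sum_(d <- divisors n) F (n %/ d)%N.
Proof.
move=> n0; rewrite -(big_map (fun d => n %/ d)%N xpredT F).
apply: perm_big; apply: uniq_perm; first exact: divisors_uniq.
  rewrite map_inj_in_uniq ?divisors_uniq // => x y.
  rewrite -!dvdn_divisors // => xn yn E.
  by rewrite -(@divn_div n x n0 xn) E divn_div.
move=> x; apply/idP/mapP.
  rewrite -dvdn_divisors // => xn; exists (n %/ x)%N; last by rewrite divn_div.
  by rewrite -dvdn_divisors // dvdn_div.
by case=> y; rewrite -!dvdn_divisors // => yn ->; rewrite dvdn_div.
Qed.

Lemma sum_div_ord m N (F : nat -> C) : (0 < m)%N -> (m <= N)%N ->
  \sum_(d <- divisors m) F d = \sum_(d < N.+1 | (d %| m)%N) F d.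
Proof.
move=> m0 mN; rewrite -(big_mkord (fun d => d %| m)%N) -big_filter.
apply: perm_big; apply: uniq_perm; first exact: divisors_uniq.
  by rewrite filter_uniq // iota_uniq.
move=> x; rewrite mem_filter mem_index_iota -dvdn_divisors //.
case xm: (x %| m)%N => //=.
by rewrite ltnS (leq_trans (dvdn_leq m0 xm) mN).
Qed.


Section G.
Variables (f h : nat -> C).
Hypothesis hf : L_additive_wrt f h.
Hypothesis hnz : forall n : nat, (0 < n)%N -> h n != 0.

Definition g n := f n / h n.

Lemma gM m n : (0 < m)%N -> (0 < n)%N -> g (m * n) = g m + g n.
Proof.
move=> m0 n0; case: hf => [[_ hM] fM]; rewrite /g fM // hM //.
have := hnz _ m0; have := hnz _ n0 => a b; field; by rewrite a b.
Qed.

Lemma gX p k : (0 < p)%N -> g (p ^ k) = k%:R * g p.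
Proof.
move=> p0; elim: k => [|k IH].
  have E := @gM 1 1 isT isT; rewrite muln1 in E.
  rewrite mul0r expn0; apply: (@addrI _ (g 1)); by rewrite addr0 -E.
by rewrite expnS gM ?expn_gt0 ?p0 // IH -addn1 natrD mulrDl mul1r addrC.
Qed.

Lemma gprod (s : seq nat) (F : nat -> nat) : (forall x, 0 < F x)%N ->
  g (\prod_(x <- s) F x) = \sum_(x <- s) g (F x).
Proof.
move=> Fp; elim: s => [|a s IH].
  by rewrite !big_nil; have := @gX 1 0 isT; rewrite expn0 mul0r.
rewrite !big_cons gM ?IH //; apply: prodn_gt0 => i; exact: Fp.
Qed.

Lemma g_decomp n : (0 < n)%N -> g n = \sum_(p <- primes n) (logn p n)%:R * g p.
Proof.
move=> n0; rewrite {1}(prod_prime_decomp n0) prime_decompE big_map /=.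
rewrite gprod; last by move=> x; exact: pfactor_gt0.
apply: eq_big_seq => p; rewrite mem_primes => /and3P [pp _ _].
by rewrite gX // prime_gt0.
Qed.


Lemma Lambda_point n d : (0 < n)%N -> (d %| n)%N ->
  Lambda_f f h d = \sum_(p <- primes n) \sum_(j <- iota 1 (logn p n))
      (if d == (p ^ j)%N then g p else 0).
Proof.
move=> n0 dn; rewrite /Lambda_f.
case: ifP => [/andP [d1 /eqP dE] | H].
  set q := pdiv d in dE *; set k := logn q d in dE *.
  have qp : prime q by apply: pdiv_prime.
  have k0 : (0 < k)%N.
    by rewrite lt0n; apply/negP => /eqP k0; move: d1; rewrite dE k0.
  have qn : q \in primes n.
    by rewrite mem_primes qp n0 (dvdn_trans (pdiv_dvd d) dn).
  have kn : (k <= logn q n)%N by rewrite -pfactor_dvdn // -dE.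
  rewrite (bigD1_seq q) ?primes_uniq //=.
  rewrite (bigD1_seq k) ?iota_uniq //=; last by rewrite mem_iota add1n ltnS k0.
  rewrite -dE eqxx big1 ?addr0; last first.
    move=> j /negbTE jk; rewrite dE eqn_exp2l ?prime_gt1 // eq_sym jk //.
  rewrite big1_seq ?addr0 // => p /andP [pq pn].
  apply: big1_seq => j /andP [_]; rewrite mem_iota => /andP [j1 _].
  case: eqP => // E; exfalso; move: pq; rewrite /q E.
  move: pn; rewrite mem_primes => /and3P [pp _ _].
  case: j j1 E => // j _ E; by rewrite pdiv_pfactor // eqxx.
rewrite big1_seq // => p /andP [_ pn]; rewrite big1_seq // => j /andP [_].
rewrite mem_iota => /andP [j1 _]; case: eqP => // E; exfalso.
move: pn; rewrite mem_primes => /and3P [pp _ _].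
case: j j1 E => // j _ E; move: H; rewrite E pdiv_pfactor // pfactorK //.
rewrite eqxx andbT; move=> /negP; apply; rewrite (leq_trans (prime_gt1 pp)) //.
by rewrite expnS leq_pmulr // expn_gt0 prime_gt0.
Qed.

Lemma sum_Lambda n : (0 < n)%N ->
  \sum_(d <- divisors n) Lambda_f f h d = g n.
Proof.
move=> n0; rewrite (@g_decomp n n0).
rewrite (eq_big_seq (fun d => \sum_(p <- primes n) \sum_(j <- iota 1 (logn p n))
      (if d == (p ^ j)%N then g p else 0))); last first.
  by move=> d; rewrite -dvdn_divisors // => dn; apply: Lambda_point.
rewrite exchange_big /=; apply: eq_big_seq => p; rewrite mem_primes => /and3P [pp _ pn].
rewrite exchange_big /=.
rewrite (eq_big_seq (fun _ => g p)); last first.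
  move=> j; rewrite mem_iota add1n ltnS => /andP [j1 jn].
  rewrite (bigD1_seq (p^j)%N) /= ?eqxx; last exact: divisors_uniq.
    by rewrite big1 ?addr0 // => i /negbTE ->.
  by rewrite -dvdn_divisors // pfactor_dvdn.
by rewrite sum_const_seq size_iota mulr_natl.
Qed.


Lemma sum_g n : (0 < n)%N ->
  \sum_(d <- divisors n) g d = (tau n)%:R * g n / 2.
Proof.
move=> n0.
have E : \sum_(d <- divisors n) g d + \sum_(d <- divisors n) g d = (tau n)%:R * g n.
  rewrite {2}(@sum_div_rev n _ n0) -big_split /=.
  rewrite (eq_big_seq (fun _ => g n)); last first.
    move=> d; rewrite -dvdn_divisors // => dn.
    have d0 : (0 < d)%N by apply: dvdn_gt0 dn.
    rewrite -gM //; first by rewrite mulnC divnK.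
    by rewrite divn_gt0 // dvdn_leq.
  by rewrite sum_const_seq mulr_natl.
rewrite -E; have two : (2:C) != 0 by rewrite pnatr_eq0.
by field.
Qed.

Lemma main n : (0 < n)%N ->
  dconv (fun d => (tau d)%:R) (Lambda_f f h) n = (tau n)%:R * g n / 2.
Proof.
move=> n0; rewrite /dconv (@sum_div_rev n _ n0).
transitivity (\sum_(d < n.+1 | (d %| n)%N) \sum_(e < n.+1 | (e %| n %/ d)%N) Lambda_f f h d).
  rewrite (@sum_div_ord n n _ n0 (leqnn n)); apply: eq_bigr => d dn.
  have d0 : (0 < d)%N by apply: dvdn_gt0 dn.
  have nd0 : (0 < n %/ d)%N by rewrite divn_gt0 // dvdn_leq.
  rewrite divn_div // -(@sum_div_ord (n %/ d) n (fun _ => Lambda_f f h d) nd0 (leq_div n d)).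
  by rewrite /tau sum_const_seq mulr_natl.
rewrite (@exchange_big_dep _ _ _ _ _ _ _ _ _ (fun e : 'I_n.+1 => (e %| n)%N) (fun (d : 'I_n.+1) (_ : 'I_n.+1) => Lambda_f f h d)) /=; last first.
  by move=> d e dn en; exact: (dvdn_trans en (dvdn_div dn)).
transitivity (\sum_(e < n.+1 | (e %| n)%N) \sum_(d <- divisors (n %/ e)) Lambda_f f h d).
  apply: eq_bigr => e en.
  have e0 : (0 < e)%N by apply: dvdn_gt0 en.
  have ne0 : (0 < n %/ e)%N by rewrite divn_gt0 // dvdn_leq.
  rewrite (@sum_div_ord (n %/ e) n _ ne0 (leq_div n e)); apply: eq_bigl => d.
  case dn: (d %| n)%N.
    by rewrite dvdn_divRL // dvdn_divRL // mulnC.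
  apply/esym/negP => dne; move/negP: dn; apply; exact: (dvdn_trans dne (dvdn_div en)).
rewrite -(@sum_div_ord n n (fun e => \sum_(d <- divisors (n %/ e)) Lambda_f f h d) n0 (leqnn n)).
rewrite (eq_big_seq (fun e => g (n %/ e)%N)); last first.
  move=> e; rewrite -dvdn_divisors // => en.
  have e0 : (0 < e)%N by apply: dvdn_gt0 en.
  by rewrite sum_Lambda // divn_gt0 // dvdn_leq.
by rewrite -sum_div_rev // sum_g.
Qed.

End G.

Lemma final_eq (a t b : C) : b != 0 -> t * (a / b) / 2 = a * t / (2 * b).
Proof. move=> b0; have two : (2:C) != 0 by rewrite pnatr_eq0. by field. Qed.

End Aux.

Local Open Scope complex_scope.

Theorem corollary2p1 (R : realType) (f h : nat -> R[i])
  (hf : L_additive_wrt f h)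
  (hnz : forall n : nat, (0 < n)%N -> h n != 0) :
  forall n : nat, (0 < n)%N ->
    dconv (fun d => (tau d)%:R) (Lambda_f f h) n
    = f n * (tau n)%:R / (2 * h n).
Proof.
move=> n n0; rewrite (@main _ f h hf hnz n n0) /g.
exact: final_eq (hnz n n0).
Qed.
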